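(* For every base $\mathcal{B}$, atomic multisets $L,K$ and ILL formulae $\varphi,\psi$: if $\Vdash^L_{\mathcal{B}}!\varphi$ and $!\varphi\Vdash^K_{\mathcal{B}}\psi$, then $\Vdash^{L,K}_{\mathcal{B}}\psi$.
   Context: Fix a set $\mathbb{A}$ of propositional atoms. ILL formulae: $\phi ::= p\in\mathbb{A} \mid \top \mid 0 \mid 1 \mid \phi\multimap\phi \mid \phi\otimes\phi \mid \phi\,\&\,\phi \mid \phi\oplus\phi \mid\ !\phi$. All multisets are finite; ''$\Gamma,\Delta$'' denotes multiset union. Atomic rules and bases: an atomic sequent is $P\Rightarrow p$ with $P$ a multiset of atoms, $p$ an atom. An atomic box is a multiset of atomic sequents. An atomic rule is a triple $\langle\mathbf{A},\mathbf{S},p\rangle$ with $\mathbf{A}$ a multiset of atomic boxes, $\mathbf{S}$ an atomic box, $p$ an atom. A base is a set of atomic rules. An atom $p$ is persistent in $\mathcal{B}$ if some $\langle\varnothing,\mathbf{S},p\rangle\in\mathcal{B}$ has $\mathbf{S}\neq\varnothing$. Derivability $\vdash_{\mathcal{B}}$: (Ref) $p\vdash_{\mathcal{B}}p$; (App) if $\langle\mathbf{A},\mathbf{S},p\rangle\in\mathcal{B}$ with $\mathbf{A}=\{\mathbf{T}_1,\dots,\mathbf{T}_m\}$, and there are atomic multisets $C_1,\dots,C_n$ ($n\ge m$) and a multiset $D=\{d_{m+1},\dots,d_n\}$ of atoms persistent in $\mathcal{B}$ such that $C_i,Q\vdash_{\mathcal{B}}q$ for every $i\le m$ and every $Q\Rightarrow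 q\in\mathbf{T}_i$, $C_j\vdash_{\mathcal{B}}d_j$ for every $m<j\le n$, and $D,U\vdash_{\mathcal{B}}v$ for every $U\Rightarrow v\in\mathbf{S}$, then $C_1,\dots,C_n\vdash_{\mathcal{B}}p$. Support $\Vdash^L_{\mathcal{B}}$ (base $\mathcal{B}$, atomic multiset $L$), by induction on formulae: $\Vdash^L_{\mathcal{B}}p$ iff $L\vdash_{\mathcal{B}}p$; $\Vdash^L_{\mathcal{B}}\varphi\multimap\psi$ iff $\varphi\Vdash^L_{\mathcal{B}}\psi$; $\Vdash^L_{\mathcal{B}}\varphi\otimes\psi$ iff for all $\mathcal{C}\supseteq\mathcal{B}$, atomic $K$, atoms $p$: if $\varphi,\psi\Vdash^K_{\mathcal{C}}p$ then $\Vdash^{L,K}_{\mathcal{C}}p$; $\Vdash^L_{\mathcal{B}}1$ iff for all $\mathcal{C}\supseteq\mathcal{B}$, $K$, $p$: if $\Vdash^K_{\mathcal{C}}p$ then $\Vdash^{L,K}_{\mathcal{C}}p$; $\Vdash^L_{\mathcal{B}}\varphi\&\psi$ iff $\Vdash^L_{\mathcal{B}}\varphi$ and $\Vdash^L_{\mathcal{B}}\psi$; $\Vdash^L_{\mathcal{B}}\varphi\oplus\psi$ iff for all $\mathcal{C}\supseteq\mathcal{B}$, $K$, $p$: if $\varphi\Vdash^K_{\mathcal{C}}p$ and $\psi\Vdash^K_{\mathcal{C}}p$ then $\Vdash^{L,K}_{\mathcal{C}}p$; $\Vdash^L_{\mathcal{B}}0$ iff $\Vdash^{L,K}_{\mathcal{B}}p$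 for all atoms $p$ and atomic $K$; $\Vdash^L_{\mathcal{B}}\top$ always; $\Vdash^L_{\mathcal{B}}!\varphi$ iff for all $\mathcal{C}\supseteq\mathcal{B}$, $K$, $p$: if (for all $\mathcal{D}\supseteq\mathcal{C}$, $\Vdash^{\varnothing}_{\mathcal{D}}\varphi$ implies $\Vdash^K_{\mathcal{D}}p$) then $\Vdash^{L,K}_{\mathcal{C}}p$. For nonempty multisets: $\Vdash^L_{\mathcal{B}}\Gamma,\Delta$ iff $L=K,M$ with $\Vdash^K_{\mathcal{B}}\Gamma$ and $\Vdash^M_{\mathcal{B}}\Delta$. For a nonempty antecedent written $!\Delta,\Theta$, where $!\Delta$ collects the formulae with top-level connective $!$ (with $\Delta$ the formulae under those $!$) and $\Theta$ contains none: $!\Delta,\Theta\Vdash^L_{\mathcal{B}}\varphi$ iff for all $\mathcal{C}\supseteq\mathcal{B}$ and atomic $K$, if $\Vdash^{\varnothing}_{\mathcal{C}}\delta$ for every $\delta\in\Delta$ and $\Vdash^K_{\mathcal{C}}\Theta$ then $\Vdash^{L,K}_{\mathcal{C}}\varphi$ (when $\Theta$ is empty, $K$ is empty). An empty antecedent: $\varnothing\Vdash^L_{\mathcal{B}}\varphi$ means $\Vdash^L_{\mathcal{B}}\varphi$. *)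

(* Defs.v *)
From Stdlib Require Import List Permutation.
Import ListNotations.
Set Implicit Arguments.

Section Defs.
Variable A : Type.

Inductive form : Type :=
| Atom : A -> form
| Top : form
| Zero : form
| One : form
| Lolli : form -> form -> form
| Tensor : form -> form -> form
| With : form -> form -> form
| Plus : form -> form -> form
| Bang : form -> form.

(* Finite multisets are represented by lists, taken up to permutation. *)
Definition aseq := (list A * A)%type.
Definition box := list aseq.
Definition rule := (list box * box * A)%type.
Definition base := rule -> Prop.

Definition subbase (B C : base) : Prop := forall r, B r -> C r.

Definition persistent (B : base) (p : A) : Prop :=
  exists S : box, S <> [] /\ B ([], S, p).

(* Derivability  L |-_B p.  In (App), [Ts] pairs each box T_i of the rule's
   premiss multiset with its context C_i (i <= m), and [Ps] pairs each
   persistent atom d_j with its context C_j (m < j <= n). *)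
Inductive derives (B : base) : list A -> A -> Prop :=
| d_ref : forall p, derives B [p] p
| d_app : forall (Abx : list box) (S : box) (p : A)
            (Ts : list (box * list A)) (Ps : list (list A * A)) (L : list A),
    B (Abx, S, p) ->
    Permutation Abx (map fst Ts) ->
    (forall T C, In (T, C) Ts -> forall Q q, In (Q, q) T -> derives B (C ++ Q) q) ->
    (forall C d, In (C, d) Ps -> persistent B d /\ derives B C d) ->
    (forall U v, In (U, v) S -> derives B (map snd Ps ++ U) v) ->
    Permutation L (concat (map snd Ts) ++ concat (map fst Ps)) ->
    derives B L p.

(* An antecedent formula, already interpreted: a formula !d contributes the
   requirement  ||-^{empty}_C d ; any other formula t contributes ||-^K_C t. *)
Inductive hyp : Type :=
| HBang : (base -> Prop) -> hyp
| HPlain : (base -> list A -> Prop) -> hyp.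

Definition bangs (G : list hyp) : list (base -> Prop) :=
  flat_map (fun h => match h with HBang P => [P] | HPlain _ => [] end) G.
Definition plains (G : list hyp) : list (base -> list A -> Prop) :=
  flat_map (fun h => match h with HBang _ => [] | HPlain P => [P] end) G.

(* ||-^K_C Theta for the (non-!) part Theta; empty Theta forces K empty. *)
Fixpoint ctx_supp (Th : list (base -> list A -> Prop)) (C : base) (K : list A) : Prop :=
  match Th with
  | [] => K = []
  | [P] => P C K
  | P :: Th' => exists K1 K2, Permutation K (K1 ++ K2) /\ P C K1 /\ ctx_supp Th' C K2
  end.

Definition ante (G : list hyp) (B : base) (L : list A)
  (concl : base -> list A -> Prop) : Prop :=
  forall C : base, subbase B C -> forall K : list A,
    (forall P, In P (bangs G) -> P C) ->
    ctx_supp (plains G) C K ->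
    concl C (L ++ K).

Fixpoint supp (phi : form) : base -> list A -> Prop :=
  match phi with
  | Atom p => fun B L => derives B L p
  | Top => fun _ _ => True
  | Zero => fun B L => forall (p : A) (K : list A), derives B (L ++ K) p
  | One => fun B L => forall (C : base) (K : list A) (p : A),
      subbase B C -> derives C K p -> derives C (L ++ K) p
  | Lolli f g => fun B L =>
      ante [ match f with Bang d => HBang (fun C => supp d C []) | _ => HPlain (supp f) end ]
           B L (supp g)
  | Tensor f g => fun B L => forall (C : base) (K : list A) (p : A),
      subbase B C ->
      ante [ match f with Bang d => HBang (fun C => supp d C []) | _ => HPlain (supp f) end ;
             match g with Bang d => HBang (fun C => supp d C []) | _ => HPlain (supp g) end ]
           C K (fun C' M => derives C' M p) ->
      derives C (L ++ K) p
  | With f g => fun B L => supp f B L /\ supp g B L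
  | Plus f g => fun B L => forall (C : base) (K : list A) (p : A),
      subbase B C ->
      ante [ match f with Bang d => HBang (fun C => supp d C []) | _ => HPlain (supp f) end ]
           C K (fun C' M => derives C' M p) ->
      ante [ match g with Bang d => HBang (fun C => supp d C []) | _ => HPlain (supp g) end ]
           C K (fun C' M => derives C' M p) ->
      derives C (L ++ K) p
  | Bang f => fun B L => forall (C : base) (K : list A) (p : A),
      subbase B C ->
      (forall D : base, subbase C D -> supp f D [] -> derives D K p) ->
      derives C (L ++ K) p
  end.

Definition hypof (f : form) : hyp :=
  match f with Bang d => HBang (fun C => supp d C []) | _ => HPlain (supp f) end.

Definition sequent (G : list form) (B : base) (L : list A) (psi : form) : Prop :=
  match G with
  | [] => supp psi B L
  | _ => ante (map hypof G) B L (supp psi)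
  end.

End Defs.

Arguments Top {A}. Arguments Zero {A}. Arguments One {A}.

(* Main.v *)
Require Import Defs.
From Stdlib Require Import List Permutation.
Import ListNotations.
Set Implicit Arguments.

Lemma derives_mono (A : Type) (B C : base A) (H : subbase B C) :
  forall L p, derives B L p -> derives C L p.
Proof.
  fix IH 3. intros L p d. destruct d as [p|Abx S p Ts Ps L0 HB Hperm HT HP HS HL].
  - constructor.
  - apply (@d_app A C Abx S p Ts Ps L0); [exact (H _ HB)|exact Hperm| | | |exact HL].
    + intros T C0 Hin Q q Hq. apply IH. exact (HT T C0 Hin Q q Hq).
    + intros C0 d0 Hin. destruct (HP C0 d0 Hin) as [[S' [Hne HS']] Hd].
      split; [exists S'; split; auto | apply IH; exact Hd].
    + intros U v Hin. apply IH. exact (HS U v Hin).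
Qed.

Lemma supp_mono (A : Type) (f : form A) : forall (B C : base A) L,
  subbase B C -> supp f B L -> supp f C L.
Proof.
  induction f; intros B C L Hs H; simpl in *.
  - eapply derives_mono; eauto.
  - auto.
  - intros; eapply derives_mono; eauto.
  - intros C' K p Hs' Hd. apply H; auto. intros r Hr; auto.
  - unfold ante in *. intros C' Hs' K. apply H. intros r Hr; auto.
  - intros C' K p Hs' Hd. apply H; auto. intros r Hr; auto.
  - destruct H; split; eauto.
  - intros C' K p Hs' H1 H2. apply H; auto. intros r Hr; auto.
  - intros C' K p Hs' Hd. apply H; auto. intros r Hr; auto.
Qed.

Lemma ante_mono (A : Type) G (B C : base A) L c :
  subbase B C -> ante G B L c -> ante G C L c.
Proof. unfold ante; intros Hs H C' Hs'. apply H. intros r Hr; auto. Qed.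

Lemma sub_refl (A : Type) (B : base A) : subbase B B.
Proof. intros r; auto. Qed.

Lemma sub_trans (A : Type) (B C D : base A) : subbase B C -> subbase C D -> subbase B D.
Proof. intros H1 H2 r Hr; auto. Qed.

Lemma plain_mono (A : Type) (f : form A) (C D : base A) M :
  subbase C D -> ctx_supp (plains [hypof f]) C M -> ctx_supp (plains [hypof f]) D M.
Proof.
  intros HD H. destruct f; cbn [hypof plains flat_map app ctx_supp] in *;
  try exact H; exact (supp_mono _ _ HD H).
Qed.

Lemma gen (A : Type) (phi psi : form A) : forall (B : base A) (L K : list A),
  supp (Bang phi) B L ->
  (forall C, subbase B C -> supp phi C [] -> supp psi C K) ->
  supp psi B (L ++ K).
Proof.
  induction psi; intros B L K Hb H; simpl in Hb.
  - simpl. apply Hb. apply sub_refl. intros D HD Hp. exact (H D HD Hp).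
  - simpl; auto.
  - simpl. intros p M. rewrite <- app_assoc. apply Hb. apply sub_refl.
    intros D HD Hp. exact (H D HD Hp p M).
  - simpl. intros C M p HC Hd. rewrite <- app_assoc. apply Hb; auto.
    intros D HD Hp. apply (H D (sub_trans HC HD) Hp D M p (sub_refl D)).
    eapply derives_mono; eauto.
  - simpl. intros C HC M Hbs Hpl. rewrite <- app_assoc. apply IHpsi2.
    + simpl. intros C' K' p HC' Hd. apply Hb; auto. eapply sub_trans; eauto.
    + intros D HD Hp. specialize (H D (sub_trans HC HD) Hp). simpl in H.
      apply H. apply sub_refl.
      * destruct psi1; simpl in *; intros P HP; try contradiction.
        destruct HP as [<-|[]]. eapply supp_mono; [exact HD|]. apply Hbs. left; auto.
      * exact (plain_mono psi1 _ HD Hpl).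
  - simpl. intros C M p HC Ha. rewrite <- app_assoc. apply Hb; auto.
    intros D HD Hp. apply (H D (sub_trans HC HD) Hp D M p (sub_refl D)).
    eapply ante_mono; eauto.
  - simpl. split.
    + apply IHpsi1; auto. intros C HC Hp; apply (H C HC Hp).
    + apply IHpsi2; auto. intros C HC Hp; apply (H C HC Hp).
  - simpl. intros C M p HC Ha1 Ha2. rewrite <- app_assoc. apply Hb; auto.
    intros D HD Hp. apply (H D (sub_trans HC HD) Hp D M p (sub_refl D));
    eapply ante_mono; eauto.
  - simpl. intros C M p HC Hf. rewrite <- app_assoc. apply Hb; auto.
    intros D HD Hp. apply (H D (sub_trans HC HD) Hp D M p (sub_refl D)).
    intros D' HD' Hf'. apply Hf; auto. eapply sub_trans; eauto.
Qed.

Theorem lemma10 (A : Type) (B : base A) (L K : list A) (phi psi : form A) :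
  supp (Bang phi) B L ->
  sequent [Bang phi] B K psi ->
  supp psi B (L ++ K).
Proof.
  intros Hb Hs. apply (@gen A phi psi); auto.
  intros C HC Hp. simpl in Hs. unfold ante in Hs.
  rewrite <- (app_nil_r K). apply Hs; auto.
  - simpl. intros P [<-|[]]; auto.
  - simpl. reflexivity.
Qed.
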